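(* Let $\mathcal{T}$ be the scheme on $\mathcal{M}$ given by $\mathcal{T}(\mathbf{p})_{2i}=p_i$ and $\mathcal{T}(\mathbf{p})_{2i+1}=M_{1/2}(M^1_i,M^2_i)$, where $$M^1_i=M_{-25/128}\big(M_{3/153}(p_i,p_{i-2}),\,p_{i-1}\big),\qquad M^2_i=M_{-25/128}\big(M_{3/153}(p_{i+1},p_{i+3}),\,p_{i+2}\big).$$ Then $\delta(\mathcal{T}(\mathbf{p}))\le 0.9844\,\delta(\mathbf{p})$ for all manifold data $\mathbf{p}$, and $\mathcal{T}$ is convergent.
   Context: $\mathcal{M}$ is a geodesically complete connected Riemannian manifold with distance $d$. $M_t(p_0,p_1)$ is the geodesic average: the point at parameter $t$ on a fixed minimal geodesic $\gamma$ with $\gamma(0)=p_0,\gamma(1)=p_1$, extended beyond $[0,1]$ when needed (assumed defined for $t=-25/128$), with $d(p_0,M_t(p_0,p_1))=|t|d(p_0,p_1)$ and $d(M_t(p_0,p_1),p_1)=|1-t|d(p_0,p_1)$. Data $\mathbf{p}=(p_i)_{i\in\mathbb{Z}}$, $\delta(\mathbf{p})=\sup_id(p_i,p_{i+1})<\infty$. The scheme is the symmetric-geodesic-inductive-mean adaptation of the linear interpolatory 6-point scheme $f_{2i+1}\mapsto\frac1{256}(3f_{i-2}-25f_{i-1}+150f_i+150f_{i+1}-25f_{i+2}+3f_{i+3})$. Convergence: for every data $\mathbf{p}$ the curves $\mathrm{PG}_k(\mathcal{T}^k(\mathbf{p}))$ converge uniformly on $\mathbb{R}$, where $\mathrm{PG}_k(\mathbf{q})(t)=M_{2^kt-n}(q_n,q_{n+1})$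 for $t\in[2^{-k}n,2^{-k}(n+1))$. *)

(* Defs.v *)
From Stdlib Require Import Reals Lra Lia ZArith.
Open Scope R_scope.

(* Abstraction of a geodesically complete connected Riemannian manifold
   (M, d) together with the chosen geodesic average M_t(p0,p1).
   - d is a metric, and (M,d) is metrically complete (Hopf--Rinow);
   - avg t p0 p1 = gamma(t) for a fixed minimal geodesic gamma from p0 to p1:
     constant-speed, distance-realizing on [0,1];
   - the extension to t = -25/128 satisfies the distance identities of the paper. *)
Record GeoSpace := {
  pt :> Type;
  gdist : pt -> pt -> R;
  dist_refl : forall x, gdist x x = 0;
  dist_sym : forall x y, gdist x y = gdist y x;
  dist_tri : forall x y z, gdist x z <= gdist x y + gdist y z;
  dist_sep : forall x y, gdist x y = 0 -> x = y;
  complete : forall u : nat -> pt,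
    (forall eps, 0 < eps -> exists N, forall m n, (N <= m)%nat -> (N <= n)%nat ->
        gdist (u m) (u n) < eps) ->
    exists l, forall eps, 0 < eps -> exists N, forall n, (N <= n)%nat -> gdist (u n) l < eps;
  avg : R -> pt -> pt -> pt;
  avg_0 : forall p0 p1, avg 0 p0 p1 = p0;
  avg_1 : forall p0 p1, avg 1 p0 p1 = p1;
  avg_geodesic : forall p0 p1 s t, 0 <= s <= 1 -> 0 <= t <= 1 ->
    gdist (avg s p0 p1) (avg t p0 p1) = Rabs (s - t) * gdist p0 p1;
  avg_ext_l : forall p0 p1,
    gdist p0 (avg (-25/128) p0 p1) = Rabs (-25/128) * gdist p0 p1;
  avg_ext_r : forall p0 p1,
    gdist (avg (-25/128) p0 p1) p1 = Rabs (1 - -25/128) * gdist p0 p1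
}.

Arguments gdist {g} _ _.
Arguments avg {g} _ _ _.

Definition is_delta {G : GeoSpace} (p : Z -> G) (D : R) : Prop :=
  is_lub (fun x => exists i : Z, x = gdist (p i) (p (i + 1)%Z)) D.

Definition finite_delta {G : GeoSpace} (p : Z -> G) : Prop :=
  exists B, forall i : Z, gdist (p i) (p (i + 1)%Z) <= B.

Definition M1 {G : GeoSpace} (p : Z -> G) (i : Z) : G :=
  avg (-25/128) (avg (3/153) (p i) (p (i - 2)%Z)) (p (i - 1)%Z).
Definition M2 {G : GeoSpace} (p : Z -> G) (i : Z) : G :=
  avg (-25/128) (avg (3/153) (p (i + 1)%Z) (p (i + 3)%Z)) (p (i + 2)%Z).

Definition scheme {G : GeoSpace} (p : Z -> G) (j : Z) : G :=
  if Z.even j then p (Z.div2 j)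
  else avg (1/2) (M1 p (Z.div2 j)) (M2 p (Z.div2 j)).

Definition PG {G : GeoSpace} (k : nat) (q : Z -> G) (t : R) : G :=
  let n := Int_part (2 ^ k * t) in
  avg (2 ^ k * t - IZR n) (q n) (q (n + 1)%Z).

(* Main.v *)
Require Import Defs.
From Stdlib Require Import Reals ZArith Lra Lia IndefiniteDescription.
Open Scope R_scope.

Lemma d_nn (G : GeoSpace) (x y : G) : 0 <= gdist x y.
Proof.
  pose proof (Defs.dist_tri G x y x) as H. rewrite Defs.dist_refl, (Defs.dist_sym G y x) in H. lra.
Qed.

Lemma avg_d0 (G : GeoSpace) (a b : G) s : 0 <= s <= 1 ->
  gdist a (avg s a b) = s * gdist a b.
Proof.
  intros Hs. pose proof (Defs.avg_geodesic G a b 0 s ltac:(lra) Hs) as H.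
  rewrite Defs.avg_0 in H. rewrite H. rewrite Rabs_left1 by lra. ring.
Qed.

Lemma avg_d1 (G : GeoSpace) (a b : G) s : 0 <= s <= 1 ->
  gdist (avg s a b) b = (1 - s) * gdist a b.
Proof.
  intros Hs. pose proof (Defs.avg_geodesic G a b s 1 Hs ltac:(lra)) as H.
  rewrite Defs.avg_1 in H. rewrite H. rewrite Rabs_left1 by lra. ring.
Qed.

Lemma scheme_even (G : GeoSpace) (p : Z -> G) i : scheme p (2 * i)%Z = p i.
Proof.
  unfold scheme. rewrite Z.even_even. f_equal. rewrite Z.div2_div, Z.mul_comm, Z.div_mul; lia.
Qed.

Lemma scheme_odd (G : GeoSpace) (p : Z -> G) i :
  scheme p (2 * i + 1)%Z = avg (1/2) (M1 p i) (M2 p i).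
Proof.
  unfold scheme. rewrite Z.even_odd.
  replace (Z.div2 (2 * i + 1)) with i by (rewrite Z.div2_div; apply Z.div_unique with 1%Z; lia). reflexivity.
Qed.

Definition cc := 9844 / 10000.

Lemma mid_bounds (G : GeoSpace) (p : Z -> G) B :
  (forall i, gdist (p i) (p (i + 1)%Z) <= B) -> forall i,
  gdist (p i) (avg (1/2) (M1 p i) (M2 p i)) <= cc * B /\
  gdist (avg (1/2) (M1 p i) (M2 p i)) (p (i + 1)%Z) <= cc * B.
Proof.
  intros H i.
  assert (h01 : gdist (p (i - 1)%Z) (p i) <= B).
  { pose proof (H (i - 1)%Z) as X. replace (i - 1 + 1)%Z with i in X by lia. exact X. }
  assert (h02 : gdist (p (i - 2)%Z) (p (i - 1)%Z) <= B).
  { pose proof (H (i - 2)%Z) as X. replace (i - 2 + 1)%Z with (i - 1)%Z in X by lia. exact X. }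
  assert (h1 := H i).
  assert (h2 : gdist (p (i + 1)%Z) (p (i + 2)%Z) <= B).
  { pose proof (H (i + 1)%Z) as X. replace (i + 1 + 1)%Z with (i + 2)%Z in X by lia. exact X. }
  assert (h3 : gdist (p (i + 2)%Z) (p (i + 3)%Z) <= B).
  { pose proof (H (i + 2)%Z) as X. replace (i + 2 + 1)%Z with (i + 3)%Z in X by lia. exact X. }
  assert (B0 : 0 <= B) by (pose proof (d_nn G (p i) (p (i+1)%Z)); lra).
  set (A := avg (3/153) (p i) (p (i - 2)%Z)).
  set (A' := avg (3/153) (p (i + 1)%Z) (p (i + 3)%Z)).
  assert (e1 : gdist (p i) A = 3/153 * gdist (p i) (p (i - 2)%Z)) by (apply avg_d0; lra).
  assert (e2 : gdist (p (i+1)%Z) A' = 3/153 * gdist (p (i+1)%Z) (p (i + 3)%Z)) by (apply avg_d0; lra).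
  assert (t1 : gdist (p i) (p (i - 2)%Z) <= 2 * B).
  { pose proof (Defs.dist_tri G (p i) (p (i-1)%Z) (p (i-2)%Z)).
    rewrite (Defs.dist_sym G (p i) (p (i-1)%Z)), (Defs.dist_sym G (p (i-1)%Z) (p (i-2)%Z)) in H0. lra. }
  assert (t2 : gdist (p (i+1)%Z) (p (i + 3)%Z) <= 2 * B).
  { pose proof (Defs.dist_tri G (p (i+1)%Z) (p (i+2)%Z) (p (i+3)%Z)). lra. }
  assert (t3 : gdist A (p (i-1)%Z) <= gdist A (p i) + gdist (p i) (p (i-1)%Z)) by apply Defs.dist_tri.
  rewrite (Defs.dist_sym G A (p i)), (Defs.dist_sym G (p i) (p (i-1)%Z)) in t3.
  assert (t4 : gdist A' (p (i+2)%Z) <= gdist A' (p (i+1)%Z) + gdist (p (i+1)%Z) (p (i+2)%Z)) by apply Defs.dist_tri.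
  rewrite (Defs.dist_sym G A' (p (i+1)%Z)) in t4.
  assert (e3 : gdist A (M1 p i) = 25/128 * gdist A (p (i-1)%Z)).
  { unfold M1. fold A. rewrite Defs.avg_ext_l. rewrite Rabs_left by lra. lra. }
  assert (e4 : gdist A' (M2 p i) = 25/128 * gdist A' (p (i+2)%Z)).
  { unfold M2. fold A'. rewrite Defs.avg_ext_l. rewrite Rabs_left by lra. lra. }
  assert (t5 : gdist (p i) (M1 p i) <= gdist (p i) A + gdist A (M1 p i)) by apply Defs.dist_tri.
  assert (t6 : gdist (p (i+1)%Z) (M2 p i) <= gdist (p (i+1)%Z) A' + gdist A' (M2 p i)) by apply Defs.dist_tri.
  assert (t7 : gdist (M1 p i) (M2 p i) <= gdist (M1 p i) (p i) + gdist (p i) (M2 p i)) by apply Defs.dist_tri.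
  assert (t8 : gdist (p i) (M2 p i) <= gdist (p i) (p (i+1)%Z) + gdist (p (i+1)%Z) (M2 p i)) by apply Defs.dist_tri.
  rewrite (Defs.dist_sym G (M1 p i) (p i)) in t7.
  set (T := avg (1/2) (M1 p i) (M2 p i)).
  assert (e5 : gdist (M1 p i) T = 1/2 * gdist (M1 p i) (M2 p i)) by (apply avg_d0; lra).
  assert (e6 : gdist T (M2 p i) = (1 - 1/2) * gdist (M1 p i) (M2 p i)) by (apply avg_d1; lra).
  assert (t9 : gdist (p i) T <= gdist (p i) (M1 p i) + gdist (M1 p i) T) by apply Defs.dist_tri.
  assert (t10 : gdist T (p (i+1)%Z) <= gdist T (M2 p i) + gdist (M2 p i) (p (i+1)%Z)) by apply Defs.dist_tri.
  rewrite (Defs.dist_sym G (M2 p i) (p (i+1)%Z)) in t10.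
  unfold cc. split; lra.
Qed.

Lemma contraction (G : GeoSpace) (p : Z -> G) B :
  (forall i, gdist (p i) (p (i + 1)%Z) <= B) -> forall j,
  gdist (scheme p j) (scheme p (j + 1)%Z) <= cc * B.
Proof.
  intros H j. destruct (Z.Even_or_Odd j) as [[m Hm]|[m Hm]]; subst j.
  - rewrite scheme_even, scheme_odd. apply (mid_bounds G p B H m).
  - replace (2 * m + 1 + 1)%Z with (2 * (m + 1))%Z by lia.
    rewrite scheme_even, scheme_odd. apply (mid_bounds G p B H m).
Qed.

Lemma int_part_double x :
  Int_part (2 * x) = (2 * Int_part x)%Z \/ Int_part (2 * x) = (2 * Int_part x + 1)%Z.
Proof.
  destruct (base_Int_part x) as [a b]. destruct (base_Int_part (2 * x)) as [c d].
  set (n := Int_part x) in *. set (m := Int_part (2 * x)) in *.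
  assert (H1 : IZR m < IZR (2 * n + 2)) by (rewrite plus_IZR, mult_IZR; lra).
  assert (H2 : IZR (2 * n) < IZR (m + 1)) by (rewrite plus_IZR, mult_IZR; lra).
  apply lt_IZR in H1. apply lt_IZR in H2. lia.
Qed.

Lemma step (G : GeoSpace) (q : Z -> G) Bq k t :
  (forall i, gdist (q i) (q (i + 1)%Z) <= Bq) ->
  gdist (PG k q t) (PG (S k) (scheme q) t) <= 3 * Bq.
Proof.
  intros H. assert (H' := contraction G q Bq H).
  assert (B0 : 0 <= Bq) by (pose proof (d_nn G (q 0%Z) (q (0+1)%Z)); specialize (H 0%Z); lra).
  unfold PG. replace (2 ^ S k * t) with (2 * (2 ^ k * t)) by (simpl; ring).
  set (x := 2 ^ k * t).
  destruct (base_Int_part x) as [a b]. destruct (base_Int_part (2 * x)) as [c d].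
  set (n := Int_part x) in *. set (m := Int_part (2 * x)) in *.
  set (P := avg (x - IZR n) (q n) (q (n + 1)%Z)).
  set (P' := avg (2 * x - IZR m) (scheme q m) (scheme q (m + 1)%Z)).
  assert (E1 : gdist (q n) P <= Bq).
  { unfold P. rewrite avg_d0 by lra. specialize (H n).
    pose proof (d_nn G (q n) (q (n+1)%Z)). nra. }
  assert (E2 : gdist (scheme q m) P' <= Bq).
  { unfold P'. rewrite avg_d0 by lra. specialize (H' m).
    pose proof (d_nn G (scheme q m) (scheme q (m+1)%Z)). unfold cc in H'. nra. }
  assert (E3 : gdist (q n) (scheme q m) <= Bq).
  { destruct (int_part_double x) as [Hm|Hm]; fold n m in Hm; rewrite Hm.
    - rewrite scheme_even, Defs.dist_refl. lra.
    - specialize (H' (2 * n)%Z). rewrite scheme_even in H'. unfold cc in H'. lra. }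
  pose proof (Defs.dist_tri G P (q n) P'). pose proof (Defs.dist_tri G (q n) (scheme q m) P').
  rewrite (Defs.dist_sym G P (q n)) in H0. lra.
Qed.

Lemma iter_bound (G : GeoSpace) (p : Z -> G) B :
  (forall i, gdist (p i) (p (i + 1)%Z) <= B) -> forall k i,
  gdist (Nat.iter k scheme p i) (Nat.iter k scheme p (i + 1)%Z) <= cc ^ k * B.
Proof.
  intros H k. induction k as [|k IH]; intros i.
  - simpl. rewrite Rmult_1_l. apply H.
  - simpl Nat.iter. pose proof (contraction G _ _ IH i). simpl pow. lra.
Qed.

Definition EE B k := 3 * B * cc ^ k / (1 - cc).

Lemma EE_step B k : EE B k - EE B (S k) = 3 * B * cc ^ k.
Proof. unfold EE, cc. simpl pow. field. Qed.

Lemma EE_nn B k : 0 <= B -> 0 <= EE B k.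
Proof.
  intros HB. unfold EE. apply Rmult_le_pos; [|unfold cc; lra].
  apply Rmult_le_pos; [lra|]. apply pow_le. unfold cc; lra.
Qed.

Lemma EE_small B : 0 <= B -> forall eps, 0 < eps -> exists N, forall n, (N <= n)%nat -> EE B n < eps.
Proof.
  intros HB eps He.
  assert (Hc : Rabs cc < 1) by (unfold cc; rewrite Rabs_right; lra).
  destruct (pow_lt_1_zero cc Hc (eps * (1 - cc) / (3 * B + 1))) as [N HN].
  { apply Rdiv_lt_0_compat; unfold cc; nra. }
  exists N. intros n Hn. specialize (HN n Hn).
  rewrite Rabs_right in HN by (apply Rle_ge, pow_le; unfold cc; lra).
  assert (P0 : 0 <= cc ^ n) by (apply pow_le; unfold cc; lra).
  assert (H1 : cc ^ n * (3 * B + 1) < eps * (1 - cc)).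
  { apply (Rmult_lt_compat_r (3 * B + 1)) in HN; [|lra].
    unfold Rdiv in HN. rewrite Rmult_assoc, Rinv_l, Rmult_1_r in HN by lra. exact HN. }
  unfold EE. apply (Rmult_lt_reg_r (1 - cc)); [unfold cc; lra|].
  unfold Rdiv. rewrite Rmult_assoc, Rinv_l, Rmult_1_r by (unfold cc; lra). nra.
Qed.

Theorem mainTheorem8 (G : GeoSpace) :
  (forall (p : Z -> G) (D : R), is_delta p D ->
     exists D', is_delta (scheme p) D' /\ D' <= (9844 / 10000) * D) /\
  (forall p : Z -> G, finite_delta p ->
     exists f : R -> G, forall eps, 0 < eps -> exists K : nat,
       forall k : nat, (K <= k)%nat -> forall t : R,
         gdist (PG k (Nat.iter k scheme p) t) (f t) < eps).
Proof.
  split.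
  - intros p D [HD _].
    assert (Hb : forall i, gdist (p i) (p (i + 1)%Z) <= D) by (intros i; apply HD; eauto).
    pose proof (contraction G p D Hb) as Hc.
    set (EE0 := fun x => exists i : Z, x = gdist (scheme p i) (scheme p (i + 1)%Z)).
    assert (Hub : is_upper_bound EE0 (cc * D)) by (intros x [i ->]; apply Hc).
    destruct (completeness EE0 (ex_intro _ _ Hub) (ex_intro _ _ (ex_intro _ 0%Z eq_refl))) as [D' HD'].
    exists D'. split; [exact HD'|]. apply HD'. exact Hub.
  - intros p [B HB].
    assert (B0 : 0 <= B) by (pose proof (d_nn G (p 0%Z) (p (0+1)%Z)); specialize (HB 0%Z); lra).
    set (F := fun k t => PG k (Nat.iter k scheme p) t).
    assert (Hst : forall k t, gdist (F k t) (F (S k) t) <= 3 * (cc ^ k * B)).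
    { intros k t. apply step. apply iter_bound. exact HB. }
    assert (Hca : forall k m t, gdist (F k t) (F (k + m)%nat t) <= EE B k - EE B (k + m)).
    { intros k m t. induction m as [|m IH].
      - rewrite Nat.add_0_r, Defs.dist_refl. lra.
      - rewrite Nat.add_succ_r.
        pose proof (Defs.dist_tri G (F k t) (F (k + m)%nat t) (F (S (k + m)) t)).
        pose proof (Hst (k + m)%nat t). pose proof (EE_step B (k + m)). lra. }
    assert (Hca' : forall k n t, (k <= n)%nat -> gdist (F k t) (F n t) <= EE B k).
    { intros k n t Hkn. replace n with (k + (n - k))%nat by lia.
      pose proof (Hca k (n - k)%nat t). pose proof (EE_nn B (k + (n - k))%nat B0). lra. }
    assert (Hlim : forall t, exists l : G, forall eps, 0 < eps -> exists N,
              forall n, (N <= n)%nat -> gdist (F n t) l < eps).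
    { intros t. apply (Defs.complete G (fun n => F n t)).
      intros eps He. destruct (EE_small B B0 (eps / 2) ltac:(lra)) as [N HN].
      exists N. intros m n Hm Hn.
      pose proof (Hca' N m t Hm). pose proof (Hca' N n t Hn). pose proof (HN N (le_n N)).
      pose proof (Defs.dist_tri G (F m t) (F N t) (F n t)).
      rewrite (Defs.dist_sym G (F m t) (F N t)) in H2. lra. }
    exists (fun t => proj1_sig (constructive_indefinite_description _ (Hlim t))).
    intros eps He. destruct (EE_small B B0 (eps / 2) ltac:(lra)) as [K HK].
    exists K. intros k Hk t.
    destruct (constructive_indefinite_description _ (Hlim t)) as [l Hl]. simpl.
    destruct (Hl (eps / 2) ltac:(lra)) as [N HN].
    pose proof (HN (k + N)%nat ltac:(lia)).
    pose proof (Hca' k (k + N)%nat t ltac:(lia)). pose proof (HK k Hk).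
    pose proof (Defs.dist_tri G (F k t) (F (k + N)%nat t) l).
    change (gdist (F k t) l < eps). lra.
Qed.
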